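(* Assume $\mathrm{int}\,D\cap\mathrm{int}\{x\in\mathbb{R}^n:Ax\in C\}\neq\emptyset$. Then: (i) $x^\star\in\mathbb{R}^n$ is a stationary point of problem (P) if and only if $x^\star\in D$, $Ax^\star\in C$ and $$0\in\partial(\|\cdot\|_1+\iota_D)(x^\star)-\frac{\|x^\star\|_1}{\|x^\star\|_2}\nabla\|\cdot\|_2(x^\star)+\partial(\iota_C\circ A)(x^\star);$$ (ii) for $\lambda>0$, $x^\star\in\mathbb{R}^n$ is a stationary point of problem (P$_\lambda$) if and only if $0_n\ne x^\star\in D$ and $$0\in\lambda\,\partial(\|\cdot\|_1+\iota_D)(x^\star)-Q_\lambda(x^\star)\nabla\|\cdot\|_2(x^\star)+\nabla(\mathrm{env}\circ A)(x^\star).$$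
   Context: Let $A\in\mathbb{R}^{m\times n}$, $b\in\mathbb{R}^m$, $\epsilon\ge0$ with $\|b\|_2>\epsilon$, $d>0$. $C:=\{y\in\mathbb{R}^m:\|y-b\|_2\le\epsilon\}$, $D:=\{x\in\mathbb{R}^n:\|x\|_2\le d\}$; $\iota_S$ denotes the indicator function of a set $S$ ($0$ on $S$, $+\infty$ off $S$). $\mathrm{env}(y):=\frac12((\|y-b\|_2-\epsilon)_+)^2$, which is convex and differentiable with $\nabla(\mathrm{env}\circ A)(x)=\frac{(\|Ax-b\|_2-\epsilon)_+}{\|Ax-b\|_2}A^T(Ax-b)$ (interpreted as $0_n$ when $\|Ax-b\|_2\le\epsilon$). $Q_\lambda(x):=(\lambda\|x\|_1+\mathrm{env}(Ax))/\|x\|_2$ on $D\setminus\{0_n\}$, $+\infty$ elsewhere. Problem (P): minimize $\|x\|_1/\|x\|_2$ subject to $\|Ax-b\|_2\le\epsilon$, $\|x\|_2\le d$; its extended objective is $\Phi(x):=\|x\|_1/\|x\|_2+\iota_D(x)+\iota_C(Ax)$ for $x\ne0_n$, $\Phi(0_n)=+\infty$. Problem (P$_\lambda$): minimize $Q_\lambda$ over $\mathbb{R}^n$. For a proper $\varphi:\mathbb{R}^n\to(-\infty,+\infty]$ and $x\in\mathrm{dom}\,\varphi$, the Fréchet subdifferential is $\hat\partial\varphi(x):=\{v:\liminf_{z\to x,z\ne x}\frac{\varphi(z)-\varphi(x)-\langle v,z-x\rangle}{\|z-x\|_2}\ge0\}$. A point $x^\star$ is a stationary point of (P) (resp. (P$_\lambda$))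 if $0\in\hat\partial\Phi(x^\star)$ (resp. $0\in\hat\partial Q_\lambda(x^\star)$). For convex functions $\partial$ denotes the usual convex subdifferential. *)

(* Defs.v *)
From mathcomp Require Import all_boot all_order all_algebra.
From mathcomp Require Import all_classical all_reals all_analysis.
Set Implicit Arguments. Unset Strict Implicit. Unset Printing Implicit Defensive.
Import Order.TTheory GRing.Theory Num.Theory.
Local Open Scope ring_scope.

Section Defs.
Variable R : realType.

Definition dotv n (u v : 'cV[R]_n) : R := \sum_(i < n) u i 0 * v i 0.
Definition norm2 n (x : 'cV[R]_n) : R := Num.sqrt (dotv x x).
Definition norm1 n (x : 'cV[R]_n) : R := \sum_(i < n) `|x i 0|.

Definition inD n (d : R) (x : 'cV[R]_n) : Prop := norm2 x <= d.
Definition inC m (b : 'cV[R]_m) (eps : R) (y : 'cV[R]_m) : Prop := norm2 (y - b) <= eps.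

Definition interior_pt n (S : 'cV[R]_n -> Prop) (x : 'cV[R]_n) : Prop :=
  exists r : R, 0 < r /\ forall y, norm2 (y - x) < r -> S y.

Definition env m (b : 'cV[R]_m) (eps : R) (y : 'cV[R]_m) : R :=
  2^-1 * (Num.max 0 (norm2 (y - b) - eps)) ^+ 2.

Definition Phi m n (A : 'M[R]_(m, n)) (b : 'cV[R]_m) (eps d : R)
  (x : 'cV[R]_n) : \bar R :=
  if `[< x != 0 /\ inD d x /\ inC b eps (A *m x) >]
  then (norm1 x / norm2 x)%:E else +oo%E.

Definition Qlam m n (lam : R) (A : 'M[R]_(m, n)) (b : 'cV[R]_m) (eps d : R)
  (x : 'cV[R]_n) : \bar R :=
  if `[< x != 0 /\ inD d x >]
  then ((lam * norm1 x + env b eps (A *m x)) / norm2 x)%:E else +oo%E.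

Definition l1_iotaD n (d : R) (x : 'cV[R]_n) : \bar R :=
  if `[< inD d x >] then (norm1 x)%:E else +oo%E.

Definition iotaC_A m n (A : 'M[R]_(m, n)) (b : 'cV[R]_m) (eps : R)
  (x : 'cV[R]_n) : \bar R :=
  if `[< inC b eps (A *m x) >] then 0%E else +oo%E.

(* Frechet subdifferential: v \in hat-partial f (x), x \in dom f;
   the liminf condition written out with epsilon-delta *)
Definition frechet_subdiff n (f : 'cV[R]_n -> \bar R) (x v : 'cV[R]_n) : Prop :=
  f x \is a fin_num /\
  forall e : R, 0 < e -> exists delta : R, 0 < delta /\
    forall z, 0 < norm2 (z - x) < delta ->
      (f x + (dotv v (z - x) - e * norm2 (z - x))%:E <= f z)%E.

Definition stationary n (f : 'cV[R]_n -> \bar R) (x : 'cV[R]_n) : Prop :=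
  frechet_subdiff f x 0.

Definition convex_subdiff n (f : 'cV[R]_n -> \bar R) (x v : 'cV[R]_n) : Prop :=
  f x \is a fin_num /\ forall z, (f x + (dotv v (z - x))%:E <= f z)%E.

Definition is_grad n (f : 'cV[R]_n -> R) (x g : 'cV[R]_n) : Prop :=
  forall e : R, 0 < e -> exists delta : R, 0 < delta /\
    forall z, norm2 (z - x) < delta ->
      `|f z - f x - dotv g (z - x)| <= e * norm2 (z - x).

End Defs.

(* Main.v *)
Require Import Defs.
From mathcomp Require Import all_boot all_order all_algebra.
From mathcomp Require Import all_classical all_reals all_analysis.
From mathcomp Require Import ring lra.
Import Order.TTheory GRing.Theory Num.Theory.
Set Implicit Arguments. Unset Strict Implicit. Unset Printing Implicit Defensive.
Local Open Scope ring_scope.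


Section Basics.
Variable R : realType.
Variable n : nat.
Implicit Types u v w : 'cV[R]_n.

Lemma dotvC u v : dotv u v = dotv v u.
Proof. by rewrite /dotv; apply: eq_bigr => i _; rewrite mulrC. Qed.

Lemma dotvDl u v w : dotv (u + v) w = dotv u w + dotv v w.
Proof. by rewrite /dotv -big_split; apply: eq_bigr => i _; rewrite mxE mulrDl. Qed.

Lemma dotvZl k u w : dotv (k *: u) w = k * dotv u w.
Proof. by rewrite /dotv mulr_sumr; apply: eq_bigr => i _; rewrite mxE mulrA. Qed.

Lemma dotvNl u w : dotv (- u) w = - dotv u w.
Proof. by rewrite -scaleN1r dotvZl mulN1r. Qed.

Lemma dotvBl u v w : dotv (u - v) w = dotv u w - dotv v w.
Proof. by rewrite dotvDl dotvNl. Qed.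

Lemma dotv0l w : dotv 0 w = 0.
Proof. by rewrite -(scale0r 0) dotvZl mul0r. Qed.

Lemma dotvDr u v w : dotv w (u + v) = dotv w u + dotv w v.
Proof. by rewrite dotvC dotvDl !(dotvC w). Qed.
Lemma dotvZr k u w : dotv w (k *: u) = k * dotv w u.
Proof. by rewrite dotvC dotvZl dotvC. Qed.
Lemma dotvNr u w : dotv w (- u) = - dotv w u.
Proof. by rewrite dotvC dotvNl dotvC. Qed.
Lemma dotvBr u v w : dotv w (u - v) = dotv w u - dotv w v.
Proof. by rewrite dotvC dotvBl !(dotvC w). Qed.
Lemma dotv0r w : dotv w 0 = 0.
Proof. by rewrite dotvC dotv0l. Qed.

Lemma dotv_ge0 u : 0 <= dotv u u.
Proof. by apply: sumr_ge0 => i _; rewrite -expr2 sqr_ge0. Qed.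

Lemma dotv_eq0 u : dotv u u = 0 -> u = 0.
Proof.
move=> /eqP; rewrite /dotv psumr_eq0; last by move=> i _; rewrite -expr2 sqr_ge0.
move=> /allP H; apply/matrixP => i j; rewrite (ord1 j) mxE.
have := H i (mem_index_enum _); rewrite /= mulf_eq0 orbb => /eqP //.
Qed.

Lemma norm2_sq u : norm2 u ^+ 2 = dotv u u.
Proof. by rewrite /norm2 sqr_sqrtr // dotv_ge0. Qed.

Lemma norm2_ge0 u : 0 <= norm2 u.
Proof. exact: sqrtr_ge0. Qed.

Lemma norm2_eq0 u : norm2 u = 0 -> u = 0.
Proof.
move=> H; apply: dotv_eq0; rewrite -norm2_sq H; exact: expr0n.
Qed.

Lemma norm20 : norm2 (0 : 'cV[R]_n) = 0.
Proof. by rewrite /norm2 dotv0l sqrtr0. Qed.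

Lemma cs u v : dotv u v ^+ 2 <= dotv u u * dotv v v.
Proof.
have [Hv|Hv] := eqVneq (dotv v v) 0.
  by rewrite (dotv_eq0 Hv) !dotv0r expr0n /= mulr0.
have Bp : 0 < dotv v v by rewrite lt0r Hv dotv_ge0.
set t := dotv u v / dotv v v.
have E : dotv (u - t *: v) (u - t *: v) = dotv u u - dotv u v ^+ 2 / dotv v v.
  rewrite !(dotvBl, dotvBr, dotvZl, dotvZr) (dotvC v u) /t; field; exact: Hv.
have := dotv_ge0 (u - t *: v); rewrite E.
by rewrite subr_ge0 ler_pdivrMr.
Qed.

Lemma cs_abs u v : `|dotv u v| <= norm2 u * norm2 v.
Proof.
rewrite -sqrtr_sqr /norm2 -sqrtrM ?dotv_ge0 //; rewrite ler_sqrt; first exact: cs.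
by rewrite mulr_ge0 ?dotv_ge0.
Qed.

Lemma cs_le u v : dotv u v <= norm2 u * norm2 v.
Proof. exact: le_trans (ler_norm _) (cs_abs u v). Qed.

Lemma norm2D u v : norm2 (u + v) <= norm2 u + norm2 v.
Proof.
rewrite -(ger0_norm (addr_ge0 (norm2_ge0 u) (norm2_ge0 v))) -sqrtr_sqr.
rewrite {1}/norm2 ler_sqrt ?sqr_ge0 //.
rewrite !(dotvDl, dotvDr) sqrrD !norm2_sq (dotvC v u).
have := cs_le u v; lra.
Qed.

Lemma norm2Z k u : norm2 (k *: u) = `|k| * norm2 u.
Proof.
by rewrite /norm2 dotvZl dotvZr mulrA -expr2 sqrtrM ?sqr_ge0 // sqrtr_sqr.
Qed.

Lemma norm2N u : norm2 (- u) = norm2 u.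
Proof. by rewrite -scaleN1r norm2Z normrN1 mul1r. Qed.

Lemma norm2B u v : norm2 (u - v) = norm2 (v - u).
Proof. by rewrite -norm2N opprB. Qed.

Lemma norm2_lip u v : `|norm2 u - norm2 v| <= norm2 (u - v).
Proof.
rewrite ler_norml; apply/andP; split.
  have := norm2D (v - u) u; rewrite subrK norm2B; lra.
have := norm2D (u - v) v; rewrite subrK; lra.
Qed.

End Basics.


Lemma andPI (a b : bool) : a -> b -> a && b.
Proof. by move=> -> ->. Qed.

Section FS.
Variable R : realType.
Variable n : nat.
Implicit Types u v w x z : 'cV[R]_n.
Implicit Types P : 'cV[R]_n -> Prop.
Implicit Types F G : 'cV[R]_n -> R.

Definition FS P F x v := forall e : R, 0 < e -> exists delta : R, 0 < delta /\
  forall z, 0 < norm2 (z - x) < delta -> P z ->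
    F x + (dotv v (z - x) - e * norm2 (z - x)) <= F z.

Definition ext P F := fun z => if `[< P z >] then (F z)%:E else +oo%E.

Lemma fs_ext P F x v : frechet_subdiff (ext P F) x v <-> P x /\ FS P F x v.
Proof.
rewrite /frechet_subdiff /ext; split.
  case: (asboolP (P x)) => [Px [_ H]|nPx [//]]; split => // e e0.
  have [delta [d0 Hd]] := H e e0; exists delta; split => // z Hz Pz.
  by have := Hd z Hz; rewrite asboolT // -EFinD lee_fin.
move=> [Px H]; rewrite asboolT //; split => // e e0.
have [delta [d0 Hd]] := H e e0; exists delta; split => // z Hz.
case: (asboolP (P z)) => Pz; last exact: leey.
by rewrite -EFinD lee_fin; apply: Hd.
Qed.

Lemma cs_ext P F x v : convex_subdiff (ext P F) x v <->
  P x /\ forall z, P z -> F x + dotv v (z - x) <= F z.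
Proof.
rewrite /convex_subdiff /ext; split.
  case: (asboolP (P x)) => [Px [_ H]|nPx [//]]; split => // z Pz.
  by have := H z; rewrite asboolT // -EFinD lee_fin.
move=> [Px H]; rewrite asboolT //; split => // z.
case: (asboolP (P z)) => Pz; last exact: leey.
by rewrite -EFinD lee_fin; apply: H.
Qed.

Lemma FS_mono P P' F x v : (forall z, P' z -> P z) -> FS P F x v -> FS P' F x v.
Proof.
move=> HP H e e0; have [delta [d0 Hd]] := H e e0; exists delta; split => // z Hz Pz.
exact: Hd _ Hz (HP _ Pz).
Qed.

Lemma FS_local P P' F x v r : 0 < r ->
  (forall z, norm2 (z - x) < r -> P z -> P' z) -> FS P' F x v -> FS P F x v.
Proof.
move=> r0 HP H e e0; have [delta [d0 Hd]] := H e e0.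
exists (Num.min delta r); split; first by rewrite lt_min d0 r0.
move=> z /andP [Hz1]; rewrite lt_min => /andP [Hz2 Hz3] Pz.
by apply: Hd; [rewrite Hz1 Hz2 | apply: HP].
Qed.

Lemma FS_fun P F G x v : (forall z, P z -> F z = G z) -> P x ->
  FS P F x v -> FS P G x v.
Proof.
move=> HFG Px H e e0; have [delta [d0 Hd]] := H e e0; exists delta; split => // z Hz Pz.
by rewrite -!HFG //; apply: Hd.
Qed.

Lemma FS_vec P F x v v' : v = v' -> FS P F x v -> FS P F x v'.
Proof. by move=> ->. Qed.

Lemma FS_add_grad P F G x v g : is_grad G x g -> FS P F x v ->
  FS P (fun z => F z + G z) x (v + g).
Proof.
move=> HG H e e0.
have e20 : 0 < e / 2 by rewrite divr_gt0.
have [d1 [d10 Hd1]] := H _ e20; have [d2 [d20 Hd2]] := HG _ e20.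
exists (Num.min d1 d2); split; first by rewrite lt_min d10 d20.
move=> z /andP [Hz1]; rewrite lt_min => /andP [Hz2 Hz3] Pz.
have h1 := Hd1 z (andPI Hz1 Hz2) Pz.
have := Hd2 z Hz3; rewrite ler_norml => /andP [h2 _].
rewrite dotvDl.
have -> : e * norm2 (z - x) = e / 2 * norm2 (z - x) + e / 2 * norm2 (z - x).
  by rewrite -mulrDl -splitr.
lra.
Qed.

Lemma FS_scale P F x v k : 0 < k -> FS P F x v ->
  FS P (fun z => k * F z) x (k *: v).
Proof.
move=> k0 H e e0.
have [delta [d0 Hd]] := H (e / k) (divr_gt0 e0 k0); exists delta; split => // z Hz Pz.
have := Hd z Hz Pz; rewrite -(ler_pM2l k0) => h.
apply: le_trans h; rewrite dotvZl le_eqVlt; apply/orP; left; apply/eqP.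
by field; rewrite gt_eqF.
Qed.

Lemma FS_quot P F x : x != 0 ->
  FS P (fun z => F z / norm2 z) x 0 <->
  FS P (fun z => F z - (F x / norm2 x) * norm2 z) x 0.
Proof.
move=> x0; have Nx : 0 < norm2 x.
  by rewrite lt0r norm2_ge0 andbT; apply/eqP => /norm2_eq0 /eqP; rewrite (negbTE x0).
have Nx2 : 0 < norm2 x / 2 by rewrite divr_gt0.
have bnd : forall z, norm2 (z - x) < norm2 x / 2 ->
    norm2 x / 2 <= norm2 z /\ norm2 z <= 2 * norm2 x.
  move=> z Hz; have := norm2_lip z x; rewrite ler_norml => /andP [h1 h2]; lra.
set c := F x / norm2 x.
have Fxc : F x - c * norm2 x = 0 by rewrite /c; field; rewrite gt_eqF.
split => H e e0.
  have e'0 : 0 < e / (2 * norm2 x) by rewrite divr_gt0 // mulr_gt0.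
  have [delta [d0 Hd]] := H _ e'0.
  exists (Num.min delta (norm2 x / 2)); split; first by rewrite lt_min d0 Nx2.
  move=> z /andP [Hz1]; rewrite lt_min => /andP [Hz2 Hz3] Pz.
  have [b1 b2] := bnd z Hz3.
  have Nz : 0 < norm2 z := lt_le_trans Nx2 b1.
  have := Hd z (andPI Hz1 Hz2) Pz; rewrite dotv0l Fxc.
  rewrite -/c add0r sub0r => h.
  have h' : c - e / (2 * norm2 x) * norm2 (z - x) <= F z / norm2 z by lra.
  move: h'; rewrite ler_pdivlMr // => h''.
  set a := e / (2 * norm2 x) * norm2 (z - x).
  have a0 : 0 <= a by rewrite mulr_ge0 ?norm2_ge0 // ltW.
  have : a * norm2 z <= a * (2 * norm2 x) by rewrite ler_wpM2l.
  have -> : a * (2 * norm2 x) = e * norm2 (z - x).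
    by rewrite /a; field; rewrite gt_eqF.
  move: h''; rewrite mulrBl -/a; lra.
have e'0 : 0 < e * norm2 x / 2 by rewrite divr_gt0 // mulr_gt0.
have [delta [d0 Hd]] := H _ e'0.
exists (Num.min delta (norm2 x / 2)); split; first by rewrite lt_min d0 Nx2.
move=> z /andP [Hz1]; rewrite lt_min => /andP [Hz2 Hz3] Pz.
have [b1 b2] := bnd z Hz3.
have Nz : 0 < norm2 z := lt_le_trans Nx2 b1.
have := Hd z (andPI Hz1 Hz2) Pz; rewrite dotv0l Fxc -/c add0r sub0r => h.
rewrite sub0r ler_pdivlMr // mulrDl.
set a := e * norm2 (z - x).
have a0 : 0 <= a by rewrite mulr_ge0 ?norm2_ge0 // ltW.
have : a * (norm2 x / 2) <= a * norm2 z by rewrite ler_wpM2l.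
have E : e * norm2 x / 2 * norm2 (z - x) = a * (norm2 x / 2) by rewrite /a; field.
rewrite E in h; rewrite mulNr; lra.
Qed.

Definition cvx P F := forall x z t, P x -> P z -> 0 <= t <= 1 ->
  P (x + t *: (z - x)) /\ F (x + t *: (z - x)) <= (1 - t) * F x + t * F z.

Lemma FS_CS P F x v : cvx P F -> P x -> FS P F x v ->
  forall z, P z -> F x + dotv v (z - x) <= F z.
Proof.
move=> Hc Px H z Pz.
have [->|zx] := eqVneq z x; first by rewrite subrr dotv0r addr0.
have Nh : 0 < norm2 (z - x).
  rewrite lt0r norm2_ge0 andbT; apply/eqP => /norm2_eq0 /eqP.
  by rewrite subr_eq0 (negbTE zx).
apply/ler_addgt0Pr => e e0.
have e10 : 0 < e / norm2 (z - x) by rewrite divr_gt0.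
have [delta [d0 Hd]] := H _ e10.
set t := Num.min 1 (delta / (2 * norm2 (z - x))).
have t0 : 0 < t by rewrite lt_min ltr01 divr_gt0 // mulr_gt0.
have t1 : t <= 1 by rewrite ge_min lexx.
have t2 : t <= delta / (2 * norm2 (z - x)) by rewrite ge_min lexx orbT.
have [Pzt Fzt] := Hc x z t Px Pz (andPI (ltW t0) t1).
have E : x + t *: (z - x) - x = t *: (z - x) by rewrite addrC addKr.
have := Hd (x + t *: (z - x)); rewrite E norm2Z ger0_norm ?(ltW t0) //.
rewrite mulr_gt0 //= => /(_ _ Pzt) h.
have : t * norm2 (z - x) < delta.
  have : t * norm2 (z - x) <= delta / (2 * norm2 (z - x)) * norm2 (z - x).
    by rewrite ler_wpM2r ?norm2_ge0.
  have -> : delta / (2 * norm2 (z - x)) * norm2 (z - x) = delta / 2.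
    by field; rewrite gt_eqF.
  lra.
move=> /h {h}; rewrite dotvZr => h.
have h2 := le_trans h Fzt.
have : t * (dotv v (z - x) - e / norm2 (z - x) * norm2 (z - x)) <= t * (F z - F x).
  move: h2; rewrite mulrBr mulrBl mul1r mulrA; lra.
rewrite ler_pM2l //.
have -> : e / norm2 (z - x) * norm2 (z - x) = e by field; rewrite gt_eqF.
lra.
Qed.

Lemma CS_FS P F x v : (forall z, P z -> F x + dotv v (z - x) <= F z) -> FS P F x v.
Proof.
move=> H e e0; exists 1; split => // z Hz Pz.
apply: le_trans (H z Pz); rewrite lerD2l lerBlDr lerDl mulr_ge0 ?norm2_ge0 //.
exact: ltW.
Qed.

Lemma multiplier P (psi g : 'cV[R]_n -> R) x x0 : cvx P psi -> cvx P g ->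
  P x -> (forall z, P z -> g z <= 0 -> psi x <= psi z) -> P x0 -> g x0 < 0 ->
  exists t, 0 <= t /\ forall z, P z -> psi x <= psi z + t * g z.
Proof.
move=> Hpsi Hg Px Hopt Px0 gx0.
have key : forall z z', P z -> P z' -> 0 < g z -> g z' < 0 ->
    (psi x - psi z) / g z <= (psi z' - psi x) / (- g z').
  move=> z z' Pz Pz' gz gz'.
  set a := g z; set a' := - g z'.
  have a0 : 0 < a by [].
  have a'0 : 0 < a' by rewrite /a' oppr_gt0.
  have aa0 : 0 < a + a' by rewrite addr_gt0.
  set l := a' / (a + a').
  have l0 : 0 <= l by rewrite divr_ge0 // ltW.
  have l1 : l <= 1 by rewrite ler_pdivrMr // mul1r lerDr ltW.
  have [Py Hpy] := Hpsi z' z l Pz' Pz (andPI l0 l1).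
  have [_ Hgy] := Hg z' z l Pz' Pz (andPI l0 l1).
  have g0 : (1 - l) * g z' + l * g z = 0.
    rewrite /l -/a; have -> : g z' = - a' by rewrite /a' opprK.
    by field; rewrite gt_eqF.
  rewrite g0 in Hgy; have h := Hopt _ Py Hgy.
  have h2 := le_trans h Hpy.
  have h3 : (a + a') * psi x <= a * psi z' + a' * psi z.
    have E1 : a * psi z' + a' * psi z = (a + a') * ((1 - l) * psi z' + l * psi z).
      by rewrite /l; field; rewrite gt_eqF.
    by rewrite E1 ler_pM2l.
  rewrite ler_pdivrMr // mulrAC ler_pdivlMr //.
  move: h3; rewrite !mulrDl. lra.
case: (pselect (exists z, P z /\ 0 < g z)) => [[z1 [Pz1 gz1]]|none].
  set L : set R := fun r => exists z, P z /\ 0 < g z /\ r = (psi x - psi z) / g z.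
  have ubL : ubound L ((psi x0 - psi x) / (- g x0)).
    by move=> r [z [Pz [gz ->]]]; apply: key.
  have neL : (L !=set0)%classic by exists ((psi x - psi z1) / g z1); exists z1.
  exists (Num.max 0 (sup L)); split; first by rewrite le_max lexx.
  move=> z Pz.
  have [gz|gz] := ltP 0 (g z).
    have : (psi x - psi z) / g z <= sup L.
      by apply: ub_le_sup; [exists ((psi x0 - psi x) / (- g x0)) | exists z].
    have hm : sup L <= Num.max 0 (sup L) by rewrite le_max lexx orbT.
    move=> /le_trans /(_ hm).
    rewrite ler_pdivrMr // => h; lra.
  have hz := Hopt z Pz gz.
  have [gz0|gz0] := eqVneq (g z) 0; first by rewrite gz0 mulr0 addr0.
  have gzn : 0 < - g z by rewrite oppr_gt0 lt_neqAle gz0 gz.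
  have : Num.max 0 (sup L) <= (psi z - psi x) / (- g z).
    rewrite ge_max; apply/andP; split.
      by rewrite divr_ge0 ?subr_ge0 // ltW.
    apply: ge_sup => // r [z' [Pz' [gz' ->]]].
    by apply: key => //; rewrite lt_neqAle gz0 gz.
  rewrite ler_pdivlMr // => h.
  move: h; rewrite mulrN; lra.
exists 0; split => // z Pz; rewrite mul0r addr0; apply: Hopt => //.
by rewrite leNgt; apply/negP => gz; apply: none; exists z.
Qed.

End FS.


Section Cvx.
Variable R : realType.
Variable n : nat.
Implicit Types u v w x z : 'cV[R]_n.
Implicit Types P : 'cV[R]_n -> Prop.
Implicit Types F G : 'cV[R]_n -> R.

Definition cvxset P := forall x z t, P x -> P z -> 0 <= t <= 1 -> P (x + t *: (z - x)).

Lemma cvx_intro P F : cvxset P ->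
  (forall x z t, 0 <= t <= 1 -> F (x + t *: (z - x)) <= (1 - t) * F x + t * F z) ->
  cvx P F.
Proof. by move=> HP HF x z t Px Pz t01; split; [apply: HP | apply: HF]. Qed.

Lemma xt_eq x z t : x + t *: (z - x) = (1 - t) *: x + t *: z.
Proof. by apply/matrixP => i j; rewrite !mxE; ring. Qed.

Lemma norm1_cvx x z t : 0 <= t <= 1 ->
  norm1 (x + t *: (z - x)) <= (1 - t) * norm1 x + t * norm1 z.
Proof.
move=> /andP [t0 t1]; rewrite /norm1 !mulr_sumr -big_split /=.
apply: ler_sum => i _; rewrite !mxE.
have -> : x i 0 + t * (z i 0 - x i 0) = (1 - t) * x i 0 + t * z i 0 by ring.
apply: le_trans (ler_normD _ _) _.
have t1' : 0 <= 1 - t by rewrite subr_ge0.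
by rewrite !normrM (ger0_norm t0) (ger0_norm t1').
Qed.

Lemma norm2_cvx x z t : 0 <= t <= 1 ->
  norm2 (x + t *: (z - x)) <= (1 - t) * norm2 x + t * norm2 z.
Proof.
move=> /andP [t0 t1]; rewrite xt_eq.
apply: le_trans (norm2D _ _) _.
have t1' : 0 <= 1 - t by rewrite subr_ge0.
by rewrite !norm2Z (ger0_norm t0) (ger0_norm t1').
Qed.

Lemma inD_cvx d : cvxset (inD d).
Proof.
move=> x z t Px Pz /andP [t0 t1]; rewrite /inD.
apply: le_trans (norm2_cvx x z (andPI t0 t1)) _.
have h1 : (1 - t) * norm2 x <= (1 - t) * d by rewrite ler_wpM2l // subr_ge0.
have h2 : t * norm2 z <= t * d by rewrite ler_wpM2l.
lra.
Qed.

Lemma cvxsetI P P' : cvxset P -> cvxset P' -> cvxset (fun z => P z /\ P' z).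
Proof.
by move=> H H' x z t [Px Px'] [Pz Pz'] t01; split; [apply: H | apply: H'].
Qed.

Lemma dotv_lin u x z t : dotv u (x + t *: (z - x)) = (1 - t) * dotv u x + t * dotv u z.
Proof. by rewrite dotvDr dotvZr dotvBr; ring. Qed.

End Cvx.

Section Prob.
Variable R : realType.
Variables m n : nat.
Variable A : 'M[R]_(m, n).
Variable b : 'cV[R]_m.
Implicit Types u v w x z y : 'cV[R]_n.

Definition q x := dotv (A *m x - b) (A *m x - b).

Lemma inC_q eps x : 0 <= eps -> inC b eps (A *m x) <-> q x <= eps ^+ 2.
Proof.
move=> e0; rewrite /inC /q -norm2_sq.
by rewrite ler_sqr // ?nnegrE ?norm2_ge0.
Qed.

Lemma q_expand x z t : q (x + t *: (z - x)) =
  (1 - t) * q x + t * q z - t * (1 - t) * dotv (A *m (z - x)) (A *m (z - x)).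
Proof.
rewrite /q.
have E1 : A *m (x + t *: (z - x)) - b = (A *m x - b) + t *: (A *m (z - x)).
  by rewrite mulmxDr -scalemxAr addrAC.
have E2 : A *m z - b = (A *m x - b) + A *m (z - x).
  by rewrite mulmxBr [RHS]addrC -addrA addKr.
rewrite E1 E2; move: (A *m x - b) (A *m (z - x)) => u w.
rewrite !(dotvDl, dotvDr, dotvZl, dotvZr) (dotvC w u); ring.
Qed.

Lemma q_cvx x z t : 0 <= t <= 1 -> q (x + t *: (z - x)) <= (1 - t) * q x + t * q z.
Proof.
move=> /andP [t0 t1]; rewrite q_expand lerBlDr lerDl.
by rewrite mulr_ge0 ?dotv_ge0 // mulr_ge0 // subr_ge0.
Qed.

Lemma inC_cvx eps : 0 <= eps -> cvxset (fun x => inC b eps (A *m x)).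
Proof.
move=> e0 x z t; rewrite !inC_q // => Px Pz t01.
apply: le_trans (q_cvx x z t01) _; case/andP: t01 => t0 t1.
have h1 : (1 - t) * q x <= (1 - t) * eps ^+ 2 by rewrite ler_wpM2l // subr_ge0.
have h2 : t * q z <= t * eps ^+ 2 by rewrite ler_wpM2l.
lra.
Qed.

Lemma q_plus x e : q (x + e) = q x + 2 * dotv (A *m x - b) (A *m e) + dotv (A *m e) (A *m e).
Proof.
rewrite /q mulmxDr addrAC; move: (A *m x - b) (A *m e) => u w.
rewrite !(dotvDl, dotvDr) (dotvC w u); ring.
Qed.

Lemma slater eps d x0 : 0 <= eps -> eps < norm2 b ->
  interior_pt (fun x => inD d x) x0 -> interior_pt (fun x => inC b eps (A *m x)) x0 ->
  inD d x0 /\ q x0 < eps ^+ 2.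
Proof.
move=> e0 eb [r1 [r10 H1]] [r [r0 H]].
have inDx0 : inD d x0 by apply: H1; rewrite subrr norm20.
have Kx0 : q x0 <= eps ^+ 2 by rewrite -inC_q //; apply: H; rewrite subrr norm20.
split => //; rewrite ltNge; apply/negP => Hq.
have Ae0 : forall e, norm2 e < r -> A *m e = 0.
  move=> e He.
  have h1 : q (x0 + e) <= eps ^+ 2.
    by rewrite -inC_q //; apply: H; rewrite addrC addKr.
  have h2 : q (x0 + - e) <= eps ^+ 2.
    by rewrite -inC_q //; apply: H; rewrite addrC addKr norm2N.
  move: h1 h2; rewrite !q_plus mulmxN !(dotvNl, dotvNr) opprK => h1 h2.
  apply: dotv_eq0; apply/eqP; rewrite eq_le dotv_ge0 andbT; lra.
have Ay0 : forall y, A *m y = 0.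
  move=> y; set k := r / (2 * (norm2 y + 1)).
  have Ny : 0 <= norm2 y := norm2_ge0 y.
  have k0 : 0 < k by rewrite divr_gt0 // mulr_gt0 // ltr_wpDl.
  have : A *m (k *: y) = 0.
    apply: Ae0; rewrite norm2Z ger0_norm ?ltW //.
    have -> : k * norm2 y = r / 2 * (norm2 y / (norm2 y + 1)).
      by rewrite /k; field; rewrite gt_eqF // ltr_wpDl.
    have : norm2 y / (norm2 y + 1) <= 1 by rewrite ler_pdivrMr ?mul1r ?lerDl // ltr_wpDl.
    have r20 : 0 < r / 2 by rewrite divr_gt0.
    move=> /(ler_wpM2l (ltW r20)); rewrite mulr1; lra.
  by rewrite -scalemxAr => /eqP; rewrite scaler_eq0 (gt_eqF k0) /= => /eqP.
move: Kx0; rewrite /q Ay0 sub0r dotvNl dotvNr opprK -norm2_sq => Kx0.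
have : eps ^+ 2 < norm2 b ^+ 2 by rewrite ltr_sqr // nnegrE ?norm2_ge0.
lra.
Qed.

End Prob.


Section Grad.
Variable R : realType.
Variable n : nat.
Implicit Types u v w x z h : 'cV[R]_n.
Implicit Types F G : 'cV[R]_n -> R.

Lemma grad_quad G x g (K : R) : 0 <= K ->
  (forall z, `|G z - G x - dotv g (z - x)| <= K * norm2 (z - x) ^+ 2) ->
  is_grad G x g.
Proof.
move=> K0 H e e0; exists (e / (K + 1)); split; first by rewrite divr_gt0 // ltr_wpDl.
move=> z Hz; apply: le_trans (H z) _.
have Nh := norm2_ge0 (z - x).
have K1 : 0 < K + 1 by rewrite ltr_wpDl.
have : (K + 1) * norm2 (z - x) <= e.
  by rewrite mulrC -ler_pdivlMr // ltW.
move=> /(ler_wpM2r Nh) h; rewrite expr2 mulrA; apply: le_trans h.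
by rewrite ler_wpM2r // ler_wpM2r // lerDl.
Qed.

Lemma grad_lin G x g (k c : R) : is_grad G x g ->
  is_grad (fun z => k * G z + c) x (k *: g).
Proof.
move=> H e e0.
have [delta [d0 Hd]] := H (e / (`|k| + 1)) (divr_gt0 e0 (ltr_wpDl (normr_ge0 k) ltr01)).
exists delta; split => // z Hz.
have -> : k * G z + c - (k * G x + c) - dotv (k *: g) (z - x)
    = k * (G z - G x - dotv g (z - x)) by rewrite dotvZl; ring.
rewrite normrM; apply: le_trans (ler_wpM2l (normr_ge0 k) (Hd z Hz)) _.
rewrite mulrA ler_wpM2r ?norm2_ge0 //.
have k1 : 0 < `|k| + 1 by rewrite ltr_wpDl.
rewrite mulrA ler_pdivrMr // mulrDr mulr1 mulrC lerDl ltW //.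
Qed.

Lemma grad_norm2 x : x != 0 -> is_grad (@norm2 R n) x ((norm2 x)^-1 *: x).
Proof.
move=> x0; have Nx : 0 < norm2 x.
  by rewrite lt0r norm2_ge0 andbT; apply/eqP => /norm2_eq0 /eqP; rewrite (negbTE x0).
apply: (@grad_quad _ _ _ (2 * norm2 x)^-1); first by rewrite invr_ge0 mulr_ge0 // ltW.
move=> z; have [h ->] : exists h, z = x + h by exists (z - x); rewrite addrC subrK.
rewrite (addrC x h) addrK (addrC h x).
have ident : norm2 (x + h) ^+ 2 = norm2 x ^+ 2 + 2 * dotv x h + norm2 h ^+ 2.
  by rewrite !norm2_sq !(dotvDl, dotvDr) (dotvC h x); ring.
have dx : dotv x h = (norm2 (x + h) ^+ 2 - norm2 x ^+ 2 - norm2 h ^+ 2) / 2.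
  by rewrite ident; field.
rewrite dotvZl dx.
have -> : norm2 (x + h) - norm2 x -
   (norm2 x)^-1 * ((norm2 (x + h) ^+ 2 - norm2 x ^+ 2 - norm2 h ^+ 2) / 2)
   = (norm2 h ^+ 2 - (norm2 (x + h) - norm2 x) ^+ 2) / (2 * norm2 x).
  by field; rewrite gt_eqF.
have l := norm2_lip (x + h) x; rewrite (addrC x h) addrK (addrC h x) in l.
have Nh := norm2_ge0 h.
move: l; rewrite ler_norml => /andP [l1 l2].
have s1 : (norm2 (x + h) - norm2 x) ^+ 2 <= norm2 h ^+ 2 by nra.
rewrite ger0_norm; last by rewrite divr_ge0 ?subr_ge0 // mulr_ge0 // ltW.
rewrite [leRHS]mulrC; apply: ler_wpM2r; first by rewrite invr_ge0 mulr_ge0 // ltW.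
have := sqr_ge0 (norm2 (x + h) - norm2 x); lra.
Qed.

End Grad.

Section Env.
Variable R : realType.
Variable m : nat.
Variable b : 'cV[R]_m.
Variable eps : R.
Hypothesis e0 : 0 <= eps.
Implicit Types y : 'cV[R]_m.

Lemma env_core (u w : 'cV[R]_m) : eps < norm2 u ->
  0 <= 2^-1 * Num.max 0 (norm2 w - eps) ^+ 2 - 2^-1 * (norm2 u - eps) ^+ 2
       - dotv (((norm2 u - eps) / norm2 u) *: u) (w - u)
    <= 2^-1 * norm2 (w - u) ^+ 2.
Proof.
move=> Hu.
set a := norm2 u - eps.
have a0 : 0 < a by rewrite /a subr_gt0.
have Nu : 0 < norm2 u by apply: le_lt_trans Hu.
set c := norm2 w - eps.
rewrite dotvZl dotvBr -(norm2_sq u).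
have cs1 := cs_le u w.
apply/andP; split.
  have h1 : a / norm2 u * (dotv u w - norm2 u ^+ 2) <= a * (c - a).
    have -> : a * (c - a) = a / norm2 u * (norm2 u * norm2 w - norm2 u ^+ 2).
      by rewrite /c /a; field; rewrite gt_eqF.
    apply: ler_wpM2l; first by rewrite divr_ge0 // ltW.
    by rewrite lerD2r.
  have h2 : a * c - 2^-1 * a ^+ 2 <= 2^-1 * Num.max 0 c ^+ 2.
    have [c0|c0] := leP 0 c.
      have := sqr_ge0 (c - a); rewrite sqrrB; lra.
    rewrite expr0n /= mulr0.
    have : a * c < 0 by rewrite pmulr_rlt0.
    have := sqr_ge0 a; lra.
  lra.
have h1 : Num.max 0 c <= norm2 (w - (eps / norm2 u) *: u).
  rewrite ge_max norm2_ge0 /=.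
  have := norm2D (w - (eps / norm2 u) *: u) ((eps / norm2 u) *: u).
  have eu : 0 <= eps / norm2 u by rewrite divr_ge0 // ltW.
  rewrite subrK norm2Z (ger0_norm eu).
  have -> : eps / norm2 u * norm2 u = eps by field; rewrite gt_eqF.
  rewrite /c; lra.
have h2 : Num.max 0 c ^+ 2 <= norm2 (w - (eps / norm2 u) *: u) ^+ 2.
  by rewrite ler_sqr ?nnegrE ?norm2_ge0 ?le_max ?lexx.
have E : w - (eps / norm2 u) *: u = (a / norm2 u) *: u + (w - u).
  by apply/matrixP => i j; rewrite !mxE /a; field; rewrite gt_eqF.
move: h2; rewrite E norm2_sq.
have [h hw] : exists h, w = u + h by exists (w - u); rewrite addrC subrK.
rewrite hw (addrC u h) addrK.
rewrite !(dotvDl, dotvDr, dotvZl, dotvZr) (dotvC h u) -(norm2_sq u) -(norm2_sq h).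
have -> : a / norm2 u * (a / norm2 u * norm2 u ^+ 2 + dotv u h)
   = a ^+ 2 + a / norm2 u * dotv u h.
  by field; rewrite gt_eqF.
rewrite addrK; lra.
Qed.

Lemma env_bound y : exists G, forall y',
  0 <= env b eps y' - env b eps y - dotv G (y' - y) <= 2^-1 * norm2 (y' - y) ^+ 2.
Proof.
have [Hu|Hu] := leP (norm2 (y - b)) eps.
  exists 0 => y'; rewrite dotv0l subr0.
  have -> : env b eps y = 0.
    by rewrite /env max_l ?subr_le0 // expr0n /= mulr0.
  rewrite subr0; apply/andP; split; first by rewrite /env mulr_ge0 ?sqr_ge0 // invr_ge0.
  rewrite /env ler_wpM2l ?invr_ge0 //.
  rewrite ler_sqr ?nnegrE ?norm2_ge0 ?le_max ?lexx //.
  rewrite ge_max norm2_ge0 /=.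
  have := norm2D (y' - y) (y - b); rewrite addrA subrK; lra.
exists (((norm2 (y - b) - eps) / norm2 (y - b)) *: (y - b)) => y'.
have hE : y' - y = (y' - b) - (y - b) by rewrite opprB addrA subrK.
have envy : env b eps y = 2^-1 * (norm2 (y - b) - eps) ^+ 2.
  by rewrite /env max_r // subr_ge0 ltW.
rewrite envy hE; exact: env_core.
Qed.

End Env.


Section Mat.
Variable R : realType.
Variables m n : nat.
Variable A : 'M[R]_(m, n).
Variable b : 'cV[R]_m.

Lemma adjoint (w : 'cV[R]_m) (h : 'cV[R]_n) : dotv w (A *m h) = dotv (A^T *m w) h.
Proof.
rewrite /dotv.
transitivity (\sum_(i < m) \sum_(j < n) w i 0 * (A i j * h j 0)).
  by apply: eq_bigr => i _; rewrite mxE mulr_sumr.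
rewrite exchange_big; apply: eq_bigr => j _; rewrite mxE mulr_suml.
by apply: eq_bigr => i _; rewrite !mxE; ring.
Qed.

Lemma opbound : exists M : R, 0 <= M /\
  forall h : 'cV[R]_n, norm2 (A *m h) ^+ 2 <= M * norm2 h ^+ 2.
Proof.
exists (\sum_(i < m) dotv (row i A)^T (row i A)^T); split.
  by apply: sumr_ge0 => i _; apply: dotv_ge0.
move=> h; rewrite !norm2_sq {1}/dotv mulr_suml; apply: ler_sum => i _.
have -> : (A *m h) i 0 = dotv (row i A)^T h.
  by rewrite mxE /dotv; apply: eq_bigr => j _; rewrite !mxE.
rewrite -expr2; exact: cs.
Qed.

Lemma grad_q x : is_grad (q A b) x (2 *: (A^T *m (A *m x - b))).
Proof.
have [M [M0 HM]] := opbound.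
apply: (grad_quad M0) => z.
have [h ->] : exists h, z = x + h by exists (z - x); rewrite addrC subrK.
rewrite (addrC x h) addrK (addrC h x) q_plus dotvZl -adjoint.
have -> : q A b x + 2 * dotv (A *m x - b) (A *m h) + dotv (A *m h) (A *m h) - q A b x -
   2 * dotv (A *m x - b) (A *m h) = dotv (A *m h) (A *m h) by ring.
by rewrite ger0_norm ?dotv_ge0 // -norm2_sq.
Qed.

Lemma grad_envA eps x : 0 <= eps ->
  exists g, is_grad (fun z => env b eps (A *m z)) x g.
Proof.
move=> e0; have [M [M0 HM]] := opbound.
have [G HG] := env_bound b e0 (A *m x).
exists (A^T *m G).
have M20 : 0 <= 2^-1 * M by rewrite mulr_ge0 // invr_ge0.
apply: (grad_quad M20) => z.
rewrite -adjoint.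
have /andP [h1 h2] := HG (A *m z).
rewrite -mulmxBr in h1 h2.
rewrite ger0_norm //; apply: le_trans h2 _.
rewrite -mulrA ler_wpM2l ?invr_ge0 //.
Qed.

End Mat.


Lemma FS_conv (R : realType) n (P : 'cV[R]_n -> Prop) F G x v v' :
  FS P F x v -> (forall z, P z -> F z = G z) -> P x -> v = v' -> FS P G x v'.
Proof. by move=> H HFG Px <-; apply: FS_fun HFG Px H. Qed.

Section Main.
Variable R : realType.
Variables m n : nat.
Variable A : 'M[R]_(m, n).
Variable b : 'cV[R]_m.
Variables eps d : R.
Hypothesis e0 : 0 <= eps.
Hypothesis eb : eps < norm2 b.

Lemma K_ne0 (z : 'cV[R]_n) : inC b eps (A *m z) -> z != 0.
Proof.
move=> Kz; apply/eqP => z0; move: Kz; rewrite z0 mulmx0 /inC sub0r norm2N.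
by rewrite leNgt eb.
Qed.

Lemma near_ne0 (x z : 'cV[R]_n) : norm2 (z - x) < norm2 x -> z != 0.
Proof.
by move=> H; apply/eqP => z0; move: H; rewrite z0 sub0r norm2N ltxx.
Qed.

Lemma Npos (x : 'cV[R]_n) : x != 0 -> 0 < norm2 x.
Proof.
move=> x0; rewrite lt0r norm2_ge0 andbT; apply/eqP => /norm2_eq0 /eqP.
by rewrite (negbTE x0).
Qed.

Lemma cvx_norm1_D : cvx (inD d) (@norm1 R n).
Proof. by apply: cvx_intro; [exact: inD_cvx | exact: norm1_cvx]. Qed.

Lemma cvx_norm1_DK : cvx (fun z => inD d z /\ inC b eps (A *m z)) (@norm1 R n).
Proof.
apply: cvx_intro; last exact: norm1_cvx.
apply: cvxsetI; [exact: inD_cvx | exact: inC_cvx].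
Qed.

Lemma part1 (xs : 'cV[R]_n) :
  (exists x0 : 'cV[R]_n,
      interior_pt (fun x => inD d x) x0 /\
      interior_pt (fun x => inC b eps (A *m x)) x0) ->
      stationary (Phi A b eps d) xs <->
      (inD d xs /\ inC b eps (A *m xs) /\
       exists v g w : 'cV[R]_n,
         convex_subdiff (l1_iotaD d) xs v /\
         is_grad (@norm2 R n) xs g /\
         convex_subdiff (iotaC_A A b eps) xs w /\
         v - (norm1 xs / norm2 xs) *: g + w = 0).
Proof.
move=> [x0 [I1 I2]].
set PDK := fun z => inD d z /\ inC b eps (A *m z).
rewrite /stationary.
change (Phi A b eps d) with
  (ext (fun z => z != 0 /\ inD d z /\ inC b eps (A *m z)) (fun z => norm1 z / norm2 z)).
rewrite fs_ext; split.
  move=> [[xs0 [Dx Kx]] HF].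
  have Nx := Npos xs0.
  have HF2 : FS PDK (fun z => norm1 z / norm2 z) xs 0.
    apply: (FS_local Nx _ HF) => z Hz [Dz Kz]; split => //.
    exact: near_ne0 Hz.
  move/(FS_quot PDK (@norm1 R n) xs0): HF2 => HF3.
  set c := norm1 xs / norm2 xs in HF3 *.
  set g := (norm2 xs)^-1 *: xs.
  have Hg : is_grad (@norm2 R n) xs g := grad_norm2 xs0.
  have HF4 : FS PDK (@norm1 R n) xs (c *: g).
    apply: (FS_conv (FS_add_grad (grad_lin c 0 Hg) HF3)) => //.
      by move=> z _ /=; ring.
    by rewrite add0r.
  have HCS := FS_CS cvx_norm1_DK (conj Dx Kx) HF4.
  set u := c *: g.
  have [Dx0 qx0] := slater e0 eb I1 I2.
  set psi := fun z => norm1 z - dotv u z.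
  set gf := fun z => q A b z - eps ^+ 2.
  have cpsi : cvx (inD d) psi.
    apply: cvx_intro; first exact: inD_cvx.
    move=> x z t t01.
    rewrite /psi dotv_lin; have := norm1_cvx x z t01; lra.
  have cgf : cvx (inD d) gf.
    apply: cvx_intro; first exact: inD_cvx.
    move=> x z t t01.
    rewrite /gf; have := q_cvx A b x z t01; lra.
  have opt : forall z, inD d z -> gf z <= 0 -> psi xs <= psi z.
    move=> z Dz; rewrite /gf subr_le0 -inC_q // => Kz.
    have := HCS z (conj Dz Kz); rewrite /psi dotvBr; lra.
  have gx0 : gf x0 < 0 by rewrite /gf subr_lt0.
  have [t [t0 Ht]] := multiplier cpsi cgf Dx opt Dx0 gx0.
  have gxs : gf xs <= 0 by rewrite /gf subr_le0 -inC_q.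
  have tg0 : t * gf xs = 0.
    apply/eqP; rewrite eq_le; apply/andP; split; first exact: mulr_ge0_le0.
    by have := Ht xs Dx; lra.
  set w := t *: (2 *: (A^T *m (A *m xs - b))).
  have Hq := grad_q A b xs.
  have H6 : FS (inD d) (fun z => norm1 z + t * gf z) xs u.
    apply: CS_FS => z Dz; have := Ht z Dz; rewrite /psi dotvBr; lra.
  have H7 : FS (inD d) (@norm1 R n) xs (u - w).
    apply: (FS_conv (FS_add_grad (grad_lin (- t) (t * eps ^+ 2) Hq) H6)) => //.
      by move=> z _ /=; rewrite /gf; ring.
    by rewrite /w scaleNr.
  split => //; split => //; exists (u - w), g, w; split.
    by rewrite cs_ext; split => //; apply: FS_CS cvx_norm1_D Dx H7.
  split => //; split; last by rewrite /u; apply/matrixP => i j; rewrite !mxE; ring.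
  rewrite cs_ext; split => // z Kz; rewrite add0r.
  have := q_plus A b xs (z - xs); rewrite addrC subrK => hq.
  rewrite /w dotvZl dotvZl -adjoint.
  have : 2 * dotv (A *m xs - b) (A *m (z - xs)) <= gf z - gf xs.
    rewrite /gf hq; have := dotv_ge0 (A *m (z - xs)); lra.
  move=> /(ler_wpM2l t0); rewrite mulrBr tg0 subr0 => h.
  apply: le_trans h _; apply: mulr_ge0_le0 => //.
  by rewrite /gf subr_le0 -inC_q.
move=> [Dx [Kx [v [g [w [Hv [Hg [Hw Heq]]]]]]]].
have xs0 := K_ne0 Kx.
move: Hv Hw; rewrite !cs_ext => [[_ Hv] [_ Hw]].
set c := norm1 xs / norm2 xs in Heq *.
have E : c *: g = v + w.
  apply/eqP; rewrite eq_sym -subr_eq0 -Heq; apply/eqP.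
  by rewrite addrAC.
have HF4 : FS PDK (@norm1 R n) xs (c *: g).
  apply: CS_FS => z [Dz Kz]; rewrite E dotvDl.
  have := Hv z Dz; have := Hw z Kz; lra.
have HF3 : FS PDK (fun z => norm1 z - c * norm2 z) xs 0.
  apply: (FS_conv (FS_add_grad (grad_lin (- c) 0 Hg) HF4)) => //.
    by move=> z _ /=; ring.
  by rewrite scaleNr subrr.
split; first by split.
apply: (FS_mono (P := PDK)); first by move=> z [_ [Dz Kz]].
by apply/(FS_quot PDK (@norm1 R n) xs0).
Qed.

Lemma part2 (lam : R) (xs : 'cV[R]_n) : 0 < lam ->
      stationary (Qlam lam A b eps d) xs <->
      (xs != 0 /\ inD d xs /\
       exists v g h : 'cV[R]_n,
         convex_subdiff (l1_iotaD d) xs v /\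
         is_grad (@norm2 R n) xs g /\
         is_grad (fun x => env b eps (A *m x)) xs h /\
         lam *: v - fine (Qlam lam A b eps d xs) *: g + h = 0).
Proof.
move=> lam0.
set f := fun z => lam * norm1 z + env b eps (A *m z).
have Qe : Qlam lam A b eps d = ext (fun z => z != 0 /\ inD d z) (fun z => f z / norm2 z).
  by [].
rewrite /stationary Qe fs_ext; split.
  move=> [[xs0 Dx] HF].
  have Nx := Npos xs0.
  have HF2 : FS (inD d) (fun z => f z / norm2 z) xs 0.
    apply: (FS_local Nx _ HF) => z Hz Dz; split => //.
    exact: near_ne0 Hz.
  move/(FS_quot (inD d) f xs0): HF2 => HF3.
  set c := f xs / norm2 xs in HF3 *.
  set g := (norm2 xs)^-1 *: xs.
  have Hg : is_grad (@norm2 R n) xs g := grad_norm2 xs0.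
  have HF4 : FS (inD d) f xs (c *: g).
    apply: (FS_conv (FS_add_grad (grad_lin c 0 Hg) HF3)) => //.
      by move=> z _ /=; ring.
    by rewrite add0r.
  have [h Hh] := grad_envA A b xs e0.
  have HF5 : FS (inD d) (fun z => lam * norm1 z) xs (c *: g - h).
    apply: (FS_conv (FS_add_grad (grad_lin (-1) 0 Hh) HF4)) => //.
      by move=> z _ /=; rewrite /f; ring.
    by rewrite scaleN1r.
  have HF6 : FS (inD d) (@norm1 R n) xs (lam^-1 *: (c *: g - h)).
    have il : 0 < lam^-1 by rewrite invr_gt0.
    apply: (FS_conv (FS_scale il HF5)) => //.
    by move=> z _; rewrite mulrA mulVf ?mul1r // gt_eqF.
  split => //; split => //; exists (lam^-1 *: (c *: g - h)), g, h; split.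
    by rewrite cs_ext; split => //; apply: FS_CS cvx_norm1_D Dx HF6.
  split => //; split => //.
  have -> : fine (ext (fun z => z != 0 /\ inD d z) (fun z => f z / norm2 z) xs) = c.
    by rewrite /ext asboolT.
  by rewrite scalerA mulfV ?gt_eqF // scale1r; apply/matrixP => i j; rewrite !mxE; ring.
move=> [xs0 [Dx [v [g [h [Hv [Hg [Hh Heq]]]]]]]].
move: Hv; rewrite cs_ext => [[_ Hv]].
have Fq : fine (ext (fun z => z != 0 /\ inD d z) (fun z => f z / norm2 z) xs) = f xs / norm2 xs.
  by rewrite /ext asboolT.
rewrite Fq in Heq.
set c := f xs / norm2 xs in Heq *.
have E : c *: g = lam *: v + h.
  apply/eqP; rewrite eq_sym -subr_eq0 -Heq; apply/eqP.
  by rewrite addrAC.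
have HF4 : FS (inD d) f xs (c *: g).
  rewrite E; apply: FS_add_grad => //.
  exact: FS_scale lam0 (CS_FS Hv).
have HF3 : FS (inD d) (fun z => f z - c * norm2 z) xs 0.
  apply: (FS_conv (FS_add_grad (grad_lin (- c) 0 Hg) HF4)) => //.
    by move=> z _ /=; ring.
  by rewrite scaleNr subrr.
split; first by split.
apply: (FS_mono (P := inD d)); first by move=> z [_ Dz].
by apply/(FS_quot (inD d) f xs0).
Qed.

End Main.

Theorem mainTheorem4 (R : realType) (m n : nat) (A : 'M[R]_(m, n))
  (b : 'cV[R]_m) (eps d : R) :
  0 <= eps -> eps < norm2 b -> 0 < d ->
  (exists x0 : 'cV[R]_n,
      interior_pt (fun x => inD d x) x0 /\
      interior_pt (fun x => inC b eps (A *m x)) x0) ->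
  (forall xs : 'cV[R]_n,
      stationary (Phi A b eps d) xs <->
      (inD d xs /\ inC b eps (A *m xs) /\
       exists v g w : 'cV[R]_n,
         convex_subdiff (l1_iotaD d) xs v /\
         is_grad (@norm2 R n) xs g /\
         convex_subdiff (iotaC_A A b eps) xs w /\
         v - (norm1 xs / norm2 xs) *: g + w = 0)) /\
  (forall lam : R, 0 < lam -> forall xs : 'cV[R]_n,
      stationary (Qlam lam A b eps d) xs <->
      (xs != 0 /\ inD d xs /\
       exists v g h : 'cV[R]_n,
         convex_subdiff (l1_iotaD d) xs v /\
         is_grad (@norm2 R n) xs g /\
         is_grad (fun x => env b eps (A *m x)) xs h /\
         lam *: v - fine (Qlam lam A b eps d xs) *: g + h = 0)).
Proof.
move=> e0 eb d0 Hint; split.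
  by move=> xs; apply: (part1 e0 eb xs Hint).
by move=> lam lam0 xs; exact: (part2 A b d e0 xs lam0).
Qed.
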